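(* There is a deterministic sorting algorithm in the rank query model that runs in $k$ rounds and asks a total of $O(k\,n^{1+1/k})$ queries on every input of $n$ elements.
   Context: Rank query model: items $x_1,\ldots,x_n$ whose ranks form an unknown permutation of $\{1,\ldots,n\}$; a query asks ''How is $\mathrm{rank}(x_i)$ compared to $m$?'' with answer ''$<$'', ''$=$'' or ''$>$''; sorting means determining all ranks. An algorithm runs in $k$ rounds if in each of $k$ rounds it submits a set of queries chosen depending only on answers of earlier rounds, then receives all answers. *)

(* Defs.v *)
From mathcomp Require Import all_boot fingroup perm.
From Stdlib Require Import Reals.

Set Implicit Arguments.
Unset Strict Implicit.
Unset Printing Implicit Defensive.

(* Items are indexed by 'I_n; the (unknown) input is a permutation s of 'I_n,
   the rank of item x_i being (s i).+1 in {1,...,n}. *)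

Definition query (n : nat) := ('I_n * nat)%type.

Definition answer (n : nat) (s : {perm 'I_n}) (q : query n) : comparison :=
  Nat.compare (s q.1).+1 q.2.

Definition transcript (n : nat) := seq (query n * comparison).

(* A deterministic round-based algorithm: the query set of round r is a
   function of (r and) the answers received in earlier rounds; the output
   (the claimed rank of every item) is a function of all answers. *)
Record algorithm (n : nat) := Algorithm {
  alg_queries : nat -> transcript n -> seq (query n);
  alg_output  : transcript n -> 'I_n -> nat
}.

Fixpoint run (n : nat) (A : algorithm n) (s : {perm 'I_n}) (r : nat)
  : transcript n :=
  match r with
  | 0 => [::]
  | r'.+1 =>
      let h := run A s r' in
      h ++ [seq (q, answer s q) | q <- alg_queries A r' h]
  end.

Definition sorts_in (n k : nat) (A : algorithm n) : Prop :=
  forall (s : {perm 'I_n}) (i : 'I_n), alg_output A (run A s k) i = (s i).+1.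

Definition num_queries (n k : nat) (A : algorithm n) (s : {perm 'I_n}) : nat :=
  size (run A s k).

(* Main.v *)
Require Import Defs.
From mathcomp Require Import all_boot fingroup perm.
From Stdlib Require Import Reals.
From mathcomp Require Import zify.
From Stdlib Require Import Lia Lra.

Set Implicit Arguments.
Unset Strict Implicit.
Local Open Scope nat_scope.
Local Notation "m ^ n" := (expn m n) : nat_scope.

Definition notLt (c : comparison) : bool :=
  match c with Lt => false | _ => true end.

Definition lo n (h : transcript n) (i : 'I_n) : nat :=
  maxn 1 (\max_(e <- h | (e.1.1 == i) && notLt e.2) e.1.2).

Definition alg n k B : algorithm n :=
  @Algorithm n
    (fun j h => [seq (i, lo h i + d * B ^ (k - j.+1)) | i <- enum 'I_n, d <- iota 1 B.-1])
    (fun h i => lo h i).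

Lemma lo_cat n (h t : transcript n) i :
  lo (h ++ t) i = maxn (lo h i) (\max_(e <- t | (e.1.1 == i) && notLt e.2) e.1.2).
Proof. by rewrite /lo big_cat /= maxnA. Qed.

Lemma notLt_ans n (s : {perm 'I_n}) (q : query n) :
  notLt (answer s q) = (q.2 <= (s q.1).+1).
Proof.
rewrite /answer; case: (Nat.compare_spec (s q.1).+1 q.2) => H /=.
- by apply/esym; apply/leP; lia.
- by apply/esym; apply/negbTE; rewrite -ltnNge; apply/ltP; lia.
- by apply/esym; apply/leP; lia.
Qed.

Lemma run_size n k B (s : {perm 'I_n}) j :
  size (run (alg n k B) s j) = j * (n * B.-1).
Proof.
elim: j => [|j IH] //=.
by rewrite size_cat size_map size_allpairs size_enum_ord size_iota IH mulSn addnC.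
Qed.

Lemma inv n k B (s : {perm 'I_n}) (HB : n <= B ^ k) j : j <= k -> forall i,
  lo (run (alg n k B) s j) i <= (s i).+1 < lo (run (alg n k B) s j) i + B ^ (k - j).
Proof.
elim: j => [|j IH] Hj i.
  rewrite /lo big_nil /= subn0.
  have := ltn_ord (s i). lia.
have [IH1 IH2] := andP (IH (ltnW Hj) i).
set h := run (alg n k B) s j in IH1 IH2 *.
rewrite /= -/h lo_cat big_map.
set l := lo h i in IH1 IH2 *.
set r := (s i).+1 in IH1 IH2 *.
set S := B ^ (k - j.+1).
have ES : B ^ (k - j) = B * S by rewrite /S -expnS; congr (expn B _); lia.
rewrite ES in IH2.
set M := \max_(q <- _ | _) _.
have HS : 0 < S.
  rewrite lt0n; apply/eqP => S0; rewrite S0 muln0 in IH2; lia.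
set d := (r - l) %/ S.
have Hd1 := divn_eq (r - l) S.
have Hd2 := ltn_pmod (r - l) HS.
rewrite -/d in Hd1.
have HdB : d < B.
  rewrite -(ltn_pmul2r HS).
  have : d * S <= r - l by lia.
  move=> H; apply: (leq_ltn_trans H). rewrite mulnC. lia.
have Hup : M <= r.
  apply/bigmax_leqP_seq => q _ /andP [/eqP Hq]; rewrite notLt_ans Hq //.
have Hlow : l + d * S <= maxn l M.
  case: (posnP d) => [->|dpos]; first by rewrite mul0n addn0 leq_maxl.
  apply: leq_trans (leq_maxr _ _).
  pose q := (i, l + d * S).
  have := @leq_bigmax_seq _ [seq (i0, lo h i0 + d0 * S) | i0 <- enum 'I_n, d0 <- iota 1 B.-1]
    (fun q => (q.1 == i) && notLt (answer s q)) (fun q => q.2) q.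
  apply.
    apply: (allpairs_f (fun i0 d0 => (i0, lo h i0 + d0 * S))); first by rewrite mem_enum.
    rewrite mem_iota; lia.
  rewrite /= eqxx notLt_ans /=. rewrite -/r. lia.
apply/andP; split.
  rewrite geq_max IH1 //.
set P := d * S in Hd1 Hlow.
have : r < l + P + S by lia.
move=> H; apply: (leq_trans H); rewrite leq_add2r //.
Qed.

Lemma sorts n k B (HB : n <= B ^ k) : sorts_in k (alg n k B).
Proof.
move=> s i.
have /andP [H1 H2] := inv s HB (leqnn k) i.
rewrite subnn expn0 addn1 ltnS in H2.
rewrite /=; apply/eqP; rewrite eqn_leq H1 H2 //.
Qed.

Lemma root_ex n k : 1 <= k -> 1 <= n -> exists B, n <= B ^ k /\ B.-1 ^ k < n.
Proof.
move=> Hk Hn.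
have ex : exists b, n <= b ^ k.
  exists n. rewrite -{1}(expn1 n) leq_pexp2l //.
case: (ex_minnP ex) => B HB Hmin.
exists B; split => //.
case: B HB Hmin => [|B] HB Hmin /=.
  rewrite exp0n //.
rewrite ltnNge; apply/negP => H.
have := Hmin B H. lia.
Qed.

Lemma powE b k : Nat.pow b k = expn b k.
Proof. elim: k => [|k IH] //=; by rewrite expnS -IH. Qed.

Lemma key n k b : 1 <= k -> 1 <= n -> b ^ k < n ->
  (INR b <= Rpower (INR n) (/ INR k))%R.
Proof.
move=> Hk Hn Hb.
have kpos : (0 < INR k)%R by apply: lt_0_INR; apply/ltP.
have npos : (0 < INR n)%R by apply: lt_0_INR; apply/ltP.
case: (posnP b) => [->|bpos].
  rewrite /Rpower /=; apply: Rlt_le; apply: exp_pos.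
have bp : (0 < INR b)%R by apply: lt_0_INR; apply/ltP.
have -> : INR b = Rpower (Rpower (INR b) (INR k)) (/ INR k).
  rewrite Rpower_mult Rinv_r; last by apply: Rgt_not_eq.
  by rewrite Rpower_1.
apply: Rle_Rpower_l.
  by apply: Rlt_le; apply: Rinv_0_lt_compat.
rewrite Rpower_pow //; split; first by apply: pow_lt.
rewrite -pow_INR powE; apply: le_INR; apply/leP; exact: (ltnW Hb).
Qed.

Theorem proposition16 :
  exists C : R, forall k n : nat, (1 <= k)%N -> (1 <= n)%N ->
    exists A : algorithm n,
      sorts_in k A /\
      forall s : {perm 'I_n},
        (INR (num_queries k A s) <= C * INR k * Rpower (INR n) (1 + / INR k))%R.
Proof.
exists 1%R => k n Hk Hn.
have [B [HB HB']] := root_ex Hk Hn.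
exists (alg n k B); split; first exact: sorts.
move=> s; rewrite /num_queries run_size.
have npos : (0 < INR n)%R by apply: lt_0_INR; apply/ltP.
have -> : INR (k * (n * B.-1)) = (INR k * (INR n * INR B.-1))%R.
  by rewrite -!mult_INR.
rewrite Rmult_1_l Rpower_plus Rpower_1 //.
apply: Rmult_le_compat_l; first exact: pos_INR.
apply: Rmult_le_compat_l; first exact: pos_INR.
exact: key.
Qed.
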